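(* Let $d_d\le d_f$ be positive integers, let $f:\mathbb{F}_q^k\to\mathrm{Im}(f)$ be a $(d_f-1)$-locally binary function, and suppose there exists a systematic $[n,k,d_d]$ linear code over $\mathbb{F}_q$ (generator matrix $[I_k\mid P]$). Then $r_f(k:d_d,d_f)\le n-k+d_f-d_d$.
   Context: $d(\cdot,\cdot)$ is Hamming distance. The function ball of $f$ of radius $\rho$ around $u$ is $B_f(u,\rho)=\{f(u'):u'\in\mathbb{F}_q^k,\ d(u,u')\le\rho\}$; $f$ is $\rho$-locally binary if $|B_f(u,\rho)|\le 2$ for all $u\in\mathbb{F}_q^k$. For integers $0\le d_d\le d_f$, an $(f\!:d_d,d_f)$-FCC with redundancy $r$ is a systematic encoding $\mathfrak{C}_f(u)=(u,p_u)\in\mathbb{F}_q^{k+r}$ with $d(\mathfrak{C}_f(u_1),\mathfrak{C}_f(u_2))\ge d_d$ whenever $u_1\ne u_2$ and $\ge d_f$ whenever $f(u_1)\ne f(u_2)$; $r_f(k:d_d,d_f)$ is the minimum such $r$. *)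

(* Defs.v *)
From HB Require Import structures.
From mathcomp Require Import all_boot all_order all_algebra all_field.
Set Implicit Arguments. Unset Strict Implicit. Unset Printing Implicit Defensive.

Definition hamming (F : finFieldType) (n : nat) (x y : 'rV[F]_n) : nat :=
  #|[set i : 'I_n | x ord0 i != y ord0 i]|.

Definition fun_ball (F : finFieldType) (k : nat) (Y : eqType)
  (f : 'rV[F]_k -> Y) (u : 'rV[F]_k) (rho : nat) : seq Y :=
  undup [seq f u' | u' <- enum [set: 'rV[F]_k] & hamming u u' <= rho].

Definition locally_binary (F : finFieldType) (k : nat) (Y : eqType)
  (f : 'rV[F]_k -> Y) (rho : nat) : Prop :=
  forall u : 'rV[F]_k, size (fun_ball f u rho) <= 2.

Definition is_FCC (F : finFieldType) (k r : nat) (Y : eqType)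
  (f : 'rV[F]_k -> Y) (dd df : nat) (p : 'rV[F]_k -> 'rV[F]_r) : Prop :=
  forall u1 u2 : 'rV[F]_k,
    (u1 != u2 -> dd <= hamming (row_mx u1 (p u1)) (row_mx u2 (p u2))) /\
    (f u1 != f u2 -> df <= hamming (row_mx u1 (p u1)) (row_mx u2 (p u2))).

Definition sys_code_min_dist (F : finFieldType) (k m : nat) (P : 'M[F]_(k, m)) (d : nat) : Prop :=
  (forall u1 u2 : 'rV[F]_k, u1 != u2 ->
      d <= hamming (row_mx u1 (u1 *m P)) (row_mx u2 (u2 *m P))) /\
  (exists u1 u2 : 'rV[F]_k, u1 != u2 /\
      hamming (row_mx u1 (u1 *m P)) (row_mx u2 (u2 *m P)) = d).

(* Main.v *)
Require Import Defs.
From HB Require Import structures.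
From mathcomp Require Import all_boot all_order all_algebra all_field.
From mathcomp Require Import zify.

Set Implicit Arguments. Unset Strict Implicit. Unset Printing Implicit Defensive.
Import GRing.Theory.

Lemma hamming_sum (F : finFieldType) (n : nat) (x y : 'rV[F]_n) :
  hamming x y = \sum_(i < n) (x ord0 i != y ord0 i).
Proof.
rewrite /hamming -sum1_card big_mkcond /=; apply: eq_bigr => i _.
by rewrite inE; case: (_ != _).
Qed.

Lemma hamming_row_mx (F : finFieldType) (m n : nat) (a a' : 'rV[F]_m) (b b' : 'rV[F]_n) :
  hamming (row_mx a b) (row_mx a' b') = hamming a a' + hamming b b'.
Proof.
rewrite !hamming_sum big_split_ord /=; congr (_ + _); apply: eq_bigr => i _.
  by rewrite !row_mxEl.
by rewrite !row_mxEr.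
Qed.

Lemma hamming_xx (F : finFieldType) (n : nat) (x : 'rV[F]_n) : hamming x x = 0.
Proof. by rewrite hamming_sum big1 // => i _; rewrite eqxx. Qed.

Lemma hamming_sym (F : finFieldType) (n : nat) (x y : 'rV[F]_n) : hamming x y = hamming y x.
Proof. by rewrite !hamming_sum; apply: eq_bigr => i _; rewrite eq_sym. Qed.

Lemma hamming_const (F : finFieldType) (n : nat) (a b : F) : a != b ->
  hamming (const_mx a : 'rV[F]_n) (const_mx b) = n.
Proof.
move=> ab; rewrite hamming_sum (eq_bigr (fun _ => 1)).
  by rewrite sum1_card card_ord.
by move=> i _; rewrite !mxE ab.
Qed.

Lemma in_ball (F : finFieldType) (k : nat) (Y : eqType) (f : 'rV[F]_k -> Y) u v rho :
  hamming u v <= rho -> f v \in fun_ball f u rho.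
Proof.
move=> h; rewrite /fun_ball mem_undup; apply/mapP; exists v => //.
by rewrite mem_filter mem_enum in_setT andbT.
Qed.

Theorem lemma7 (F : finFieldType) (k n dd df : nat) (Y : eqType)
  (f : 'rV[F]_k -> Y) :
  0 < dd -> dd <= df ->
  locally_binary f (df - 1) ->
  k <= n ->
  (exists P : 'M[F]_(k, n - k), sys_code_min_dist P dd) ->
  (* r_f(k : dd, df) <= n - k + df - dd *)
  exists r : nat, r <= n - k + df - dd /\
    exists p : 'rV[F]_k -> 'rV[F]_r, is_FCC f dd df p.
Proof.
move=> dd0 dddf lb kn [P [HP _]].
pose e := fun u v : 'rV[F]_k => (hamming u v <= df - 1) && (f u != f v).
have esym : symmetric e.
  by move=> u v; rewrite /e hamming_sym eq_sym.
have L : forall u v w, e u v -> e u w -> f v = f w.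
  move=> u v w /andP[h1 n1] /andP[h2 n2]; case: (eqVneq (f v) (f w)) => // nvw; exfalso.
  have := lb u.
  have: size [:: f u; f v; f w] <= size (fun_ball f u (df - 1)).
    apply: uniq_leq_size.
      by rewrite /= !inE negb_or n1 n2 nvw.
    move=> y; rewrite !inE => /or3P[] /eqP ->; apply: in_ball => //.
    by rewrite hamming_xx.
  move=> /= h1' h2'; have := leq_trans h1' h2'; by [].
have csym := sym_connect_sym esym.
have Pr : forall r u, connect e r u -> forall v, e u v -> f u = f r \/ f v = f r.
  move=> r u /connectP[s].
  pose Q := fun x => forall v, e x v -> f x = f r \/ f v = f r.
  have step : forall x y, Q x -> e x y -> Q y.
    move=> x y Qx exy v eyv; case: (Qx y exy) => [fx|]; last by left.
    right; rewrite -fx; apply: (L y); first by []. by rewrite esym.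
  have gen : forall x s, Q x -> path e x s -> Q (last x s).
    move=> x0 s0; elim: s0 x0 => [|y s0 IH] x0 //= Qx /andP[exy ps].
    exact: IH (step _ _ Qx exy) ps.
  move=> ps ->; apply: gen ps => v _; by left.
pose c := fun u => if f u == f (fingraph.root e u) then (1%R:F) else 0%R.
have cne : forall u1 u2, e u1 u2 -> c u1 != c u2.
  move=> u1 u2 e12.
  have rr : fingraph.root e u1 = fingraph.root e u2 by apply/(fingraph.rootP csym); exact: connect1.
  have cr : connect e (fingraph.root e u1) u1 by rewrite csym fingraph.connect_root.
  have fne : f u1 != f u2 by case/andP: e12.
  have o : (1%R : F) != 0%R by exact: oner_neq0.
  rewrite /c -rr; case: (Pr _ _ cr _ e12) => E.
    rewrite E eqxx /=; case: ifP => [/eqP h|_] //.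
    by rewrite E h eqxx in fne.
  rewrite E eqxx /=; case: ifP => [/eqP h|_]; last by rewrite eq_sym.
  by rewrite E h eqxx in fne.
exists (n - k + (df - dd)); split; first lia.
exists (fun u => row_mx (u *m P) (const_mx (c u))) => u1 u2.
rewrite !hamming_row_mx; split.
  by move=> ne; have := HP u1 u2 ne; rewrite hamming_row_mx; lia.
move=> fne; case: (leqP df (hamming u1 u2)) => h; first lia.
have e12 : e u1 u2 by rewrite /e fne andbT; lia.
have ne : u1 != u2 by apply: contraNneq fne => ->.
rewrite hamming_const; last exact: cne.
by have := HP u1 u2 ne; rewrite hamming_row_mx; lia.
Qed.
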